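(* Let $p>1$ be an integer and let $u^{(p)}$ be the fixed point of the substitution $\varphi_p(L)=L^pS$, $\varphi_p(S)=M$, $\varphi_p(M)=L^{p-1}S$. (i) For every factor $\hat v$ of $u^{(p)}$, $|\hat v|_M\le 1+\frac{|\hat v|-1}{p^2+p}$. (ii) If moreover $\hat v$ has a prefix or a suffix of length greater than or equal to $\Delta$ (a nonnegative integer) that contains no letter $M$, then $|\hat v|_M\le\left\lceil\frac{|\hat v|-\Delta}{p^2+p}\right\rceil$.
   Context: $u^{(p)}=\lim_{n\to\infty}\varphi_p^n(L)$. A factor is a finite contiguous subword; $|w|$ is the length and $|w|_M$ the number of occurrences of $M$ in $w$. *)

(* Defs.v *)
From HB Require Import structures.
From mathcomp Require Import all_boot all_order all_algebra.
Set Implicit Arguments. Unset Strict Implicit. Unset Printing Implicit Defensive.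
Import Order.TTheory GRing.Theory Num.Theory.

Inductive letter := L | S | M.

Definition isM (a : letter) : bool := if a is M then true else false.

Definition countM (w : seq letter) : nat := count isM w.

Definition phi_letter (p : nat) (a : letter) : seq letter :=
  match a with
  | L => nseq p L ++ [:: S]
  | S => [:: M]
  | M => nseq p.-1 L ++ [:: S]
  end.

Definition phi (p : nat) (w : seq letter) : seq letter :=
  flatten (map (phi_letter p) w).

(* u^(p) = lim_n phi_p^n(L): since phi_p^n(L) is a prefix of phi_p^(n+1)(L)
   and |phi_p^(i+1)(L)| > i, the i-th letter of the limit is the i-th letter
   of phi_p^(i+1)(L). *)
Definition u (p : nat) (i : nat) : letter :=
  nth L (iter i.+1 (phi p) [:: L]) i.

Definition factor (p i n : nat) : seq letter := [seq u p k | k <- iota i n].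

Definition is_factor (p : nat) (v : seq letter) : Prop :=
  exists i n, v = factor p i n.

(* Main.v *)
Require Import Defs.
From mathcomp Require Import all_boot all_order all_algebra.
From mathcomp Require Import zify lra.
Import Order.TTheory GRing.Theory Num.Theory.

Fixpoint run {St : Type} (step : St -> letter -> option St) (s : St)
  (w : seq letter) : option St :=
  match w with
  | [::] => Some s
  | x :: w' => match step s x with Some s' => run step s' w' | None => None end
  end.

Lemma run_cat St (step : St -> letter -> option St) s a b :
  run step s (a ++ b) =
  match run step s a with Some s' => run step s' b | None => None end.
Proof.
elim: a s => [|x a IH] s //=.
by case: (step s x) => [s'|] //; apply: IH.
Qed.

Lemma run_catP St (step : St -> letter -> option St) s a b :
  isSome (run step s (a ++ b)) ->
  isSome (run step s a) /\ exists s', isSome (run step s' b).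
Proof.
rewrite run_cat; case: (run step s a) => [s'|] //= H.
by split => //; exists s'.
Qed.

Lemma phi_cons p x w : phi p (x :: w) = phi_letter p x ++ phi p w.
Proof. by []. Qed.

Lemma phi_cat p a b : phi p (a ++ b) = phi p a ++ phi p b.
Proof. by rewrite /phi map_cat flatten_cat. Qed.

Lemma phiL p : phi_letter p L = nseq p L ++ [:: S]. Proof. by []. Qed.
Lemma phiS p : phi_letter p S = [:: M]. Proof. by []. Qed.
Lemma phiM p : phi_letter p M = nseq p.-1 L ++ [:: S]. Proof. by []. Qed.

Definition step3 (b : bool) (x : letter) : option bool :=
  match x with S => if b then None else Some true | _ => Some false end.
Definition step2 (b : bool) (x : letter) : option bool :=
  match x with M => if b then Some false else None | S => Some true | L => Some false end.
Definition stepG (N : nat) (d : nat) (x : letter) : option nat :=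
  if isM x then (if (N.-1 <= d)%N then Some 0%N else None) else Some d.+1.

Lemma run3_nseqL k b : run step3 b (nseq k.+1 L ++ [:: S]) = Some true.
Proof. by elim: k b => [|k IH] b //=; apply: IH. Qed.

Lemma run2_nseqL k b : run step2 b (nseq k.+1 L ++ [:: S]) = Some true.
Proof. by elim: k b => [|k IH] b //=; apply: IH. Qed.

Lemma L3 q w b : isSome (run step3 b (phi q.+2 w)).
Proof.
elim: w b => [|x w IH] b //.
rewrite phi_cons run_cat; case: x; rewrite ?phiL ?phiS ?phiM.
- by rewrite (run3_nseqL q.+1); apply: IH.
- by apply: IH.
- by rewrite (run3_nseqL q); apply: IH.
Qed.

Lemma L2 (q : nat) (w : seq letter) (b c : bool) : isSome (run step3 b w) -> (~~ b -> c) ->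
  isSome (run step2 c (phi q.+2 w)).
Proof.
elim: w b c => [|x w IH] b c //.
rewrite phi_cons run_cat; case: x; rewrite ?phiL ?phiS ?phiM => H1 H2.
- by rewrite (run2_nseqL q.+1); apply: (IH false).
- case: b H1 H2 => // H1 H2.
  by rewrite (H2 isT) /=; apply: (IH true).
- by rewrite (run2_nseqL q); apply: (IH false).
Qed.

Lemma runG_nseqL N k d : run (stepG N) d (nseq k L) = Some (d + k)%N.
Proof. by elim: k d => [|k IH] d /=; [rewrite addn0 | rewrite IH addSnnS]. Qed.

Lemma runG_blocks N p k d :
  run (stepG N) d (phi p (nseq k L)) = Some (d + k * p.+1)%N.
Proof.
elim: k d => [|k IH] d /=; first by rewrite addn0.
rewrite (phi_cons p L) run_cat /= run_cat runG_nseqL /= IH.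
by congr Some; rewrite mulSn; lia.
Qed.

Lemma phi1 p x : phi p [:: x] = phi_letter p x.
Proof. by rewrite /phi /= cats0. Qed.

Lemma LG (q : nat) (w : seq letter) (c : bool) (d : nat) :
  isSome (run step2 c w) -> (c -> q.+2 <= d)%N ->
  isSome (run (stepG ((q.+2)^2 + q.+2)) d (phi q.+2 (phi q.+2 w))).
Proof.
elim: w c d => [|x w IH] c d //.
rewrite phi_cons phi_cat run_cat; case: x; rewrite ?phiL ?phiS ?phiM => H1 H2.
- rewrite phi_cat run_cat runG_blocks phi1 phiS /= /stepG /=.
  have -> : (((q.+2)^2 + q.+2).-1 <= d + q.+2 * q.+3)%N by nia.
  by apply: (IH false).
- rewrite phi1 phiM run_cat runG_nseqL /=.
  by apply: (IH true) => // _; lia.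
- case: c H1 H2 => // H1 H2.
  have Hd := H2 isT.
  rewrite phi_cat run_cat runG_blocks phi1 phiS /= /stepG /=.
  have -> : (((q.+2)^2 + q.+2).-1 <= d + q.+1 * q.+3)%N by nia.
  by apply: (IH false).
Qed.

Lemma KL1 N v d : isSome (run (stepG N) d v) -> has isM v ->
  (N.-1 <= d + find isM v)%N.
Proof.
elim: v d => [|x v IH] d //=.
rewrite /stepG; case: x => /=.
- by move=> H Hh; have := IH _ H Hh; lia.
- by move=> H Hh; have := IH _ H Hh; lia.
- by case: ifP => // Hd _ _; lia.
Qed.

Lemma KL2 N v d : isSome (run (stepG N) d v) -> has isM v ->
  (countM v * N + 1 + find isM v + find isM (rev v) <= size v + N)%N.
Proof.
elim: v d => [|x v IH] d //=.
rewrite /countM /= rev_cons -cats1 find_cat has_rev.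
rewrite /stepG; case: x => /=.
- move=> H Hh; rewrite Hh; have := IH _ H Hh; rewrite /countM; lia.
- move=> H Hh; rewrite Hh; have := IH _ H Hh; rewrite /countM; lia.
- case: ifP => // Hd H _.
  case Hh: (has isM v).
  + have := IH _ H Hh; have := @KL1 _ _ _ H Hh; rewrite /countM; nia.
  + have : count isM v = 0%N by apply/eqP; rewrite -leqn0 leqNgt -has_count Hh.
    rewrite size_rev; lia.
Qed.

Definition W p m := iter m (phi p) [:: L].

Lemma W_S p m : W p m.+1 = phi p (W p m). Proof. by []. Qed.

Lemma W_prefix q m : exists s, W q.+2 m.+1 = W q.+2 m ++ s.
Proof.
elim: m => [|m [s Hs]]; first by exists (nseq q.+1 L ++ [:: S]); rewrite /W /= /phi /= cats0.
by exists (phi q.+2 s); rewrite {1}W_S {1}Hs phi_cat.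
Qed.

Lemma W_prefix_le q m m' : (m <= m')%N -> exists s, W q.+2 m' = W q.+2 m ++ s.
Proof.
elim: m' => [|m' IH]; first by rewrite leqn0 => /eqP ->; exists [::]; rewrite cats0.
rewrite leq_eqVlt => /orP [/eqP ->|]; first by exists [::]; rewrite cats0.
rewrite ltnS => /IH [s Hs]; have [t Ht] := W_prefix q m'.
by exists (s ++ t); rewrite Ht Hs catA.
Qed.

Lemma size_phi p w : (size w <= size (phi p w))%N.
Proof.
elim: w => [|x w IH] //; rewrite phi_cons size_cat /=.
by case: x; rewrite ?phiL ?phiS ?phiM ?size_cat ?size_nseq /=; lia.
Qed.

Lemma size_W q m : (m < size (W q.+2 m))%N.
Proof.
elim: m => [|m IH] //.
have [s Hs] := @W_prefix_le q _ _ (leq0n m).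
have Hz : size (W q.+2 m) = (size s).+1 by rewrite Hs.
rewrite W_S Hs (_ : W q.+2 0 ++ s = L :: s) // phi_cons size_cat phiL size_cat size_nseq /=.
have := size_phi q.+2 s; lia.
Qed.

Lemma u_W q i m : (i < size (W q.+2 m))%N -> u q.+2 i = nth L (W q.+2 m) i.
Proof.
move=> Hi.
have [s1 H1] := @W_prefix_le q _ _ (leq_maxl i.+1 m).
have [s2 H2] := @W_prefix_le q _ _ (leq_maxr i.+1 m).
have Hi1 : (i < size (W q.+2 i.+1))%N by have := size_W q i.+1; lia.
have E1 : nth L (W q.+2 i.+1) i = nth L (W q.+2 (maxn i.+1 m)) i
  by rewrite H1 nth_cat Hi1.
have E2 : nth L (W q.+2 m) i = nth L (W q.+2 (maxn i.+1 m)) i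
  by rewrite H2 nth_cat Hi.
rewrite /u; change (iter i.+1 (phi q.+2) [:: L]) with (W q.+2 i.+1).
by rewrite E1 E2.
Qed.

Lemma factor_W q i n m : (i + n <= size (W q.+2 m))%N ->
  factor q.+2 i n = take n (drop i (W q.+2 m)).
Proof.
move=> Hs; apply: (@eq_from_nth _ L).
  by rewrite size_map size_iota size_takel // size_drop; lia.
rewrite size_map size_iota => j Hj.
rewrite (nth_map 0%N) ?size_iota // nth_iota // nth_take // nth_drop.
by apply: u_W; lia.
Qed.

Lemma W_step3 q k : isSome (run step3 true (W q.+2 k)).
Proof. by case: k => [|k] //=; apply: L3. Qed.

Lemma factor_run q i n : exists d,
  isSome (run (stepG ((q.+2)^2 + q.+2)) d (factor q.+2 i n)).
Proof.
set m := (i + n + 3)%N.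
have Hs : (i + n <= size (W q.+2 m))%N by have := size_W q m; lia.
rewrite (@factor_W q i n m Hs).
have HW : isSome (run (stepG ((q.+2)^2 + q.+2)) ((q.+2)^2 + q.+2) (W q.+2 m)).
  rewrite /m addn3 !W_S; apply: (@LG q _ true) => //; last by lia.
  by apply: (@L2 q _ true) => //; apply: W_step3.
have := @run_catP nat (stepG ((q.+2)^2 + q.+2)) ((q.+2)^2 + q.+2) (take i (W q.+2 m)) (drop i (W q.+2 m)).
rewrite cat_take_drop => /(_ HW) [_ [d Hd]].
have := @run_catP nat (stepG ((q.+2)^2 + q.+2)) d (take n (drop i (W q.+2 m))) (drop n (drop i (W q.+2 m))).
rewrite cat_take_drop => /(_ Hd) [Hd' _].
by exists d.
Qed.

Lemma find_take v k : (k <= size v)%N -> countM (take k v) = 0%N ->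
  (k <= find isM v)%N.
Proof.
move=> Hk Hc; rewrite -(cat_take_drop k v) find_cat.
have -> : has isM (take k v) = false by rewrite has_count -/(countM _) Hc.
rewrite size_takel //; exact: leq_addr.
Qed.

Lemma find_drop v k : (k <= size v)%N -> countM (drop (size v - k) v) = 0%N ->
  (k <= find isM (rev v))%N.
Proof.
move=> Hk Hc; apply: find_take; first by rewrite size_rev.
by rewrite take_rev /countM count_rev.
Qed.

Local Open Scope ring_scope.

Theorem mainTheorem7 (p : nat) (hp : (1 < p)%N) :
  (forall v : seq letter, is_factor p v ->
     (countM v)%:Q <= 1 + ((size v)%:Q - 1) / (p ^ 2 + p)%N%:Q)
  /\
  (forall (v : seq letter) (Delta : nat), is_factor p v ->
     ((exists k : nat, [/\ (Delta <= k)%N, (k <= size v)%N & countM (take k v) = 0%N])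
      \/ (exists k : nat, [/\ (Delta <= k)%N, (k <= size v)%N & countM (drop (size v - k) v) = 0%N])) ->
     ((countM v)%:Z <= Num.ceil (((size v)%:Q - Delta%:Q) / (p ^ 2 + p)%N%:Q))).
Proof.
case: p hp => [|[|q]] // _.
set N := ((q.+2) ^ 2 + q.+2)%N.
have HN : (1 <= N)%N by rewrite /N; lia.
have key : forall v, is_factor q.+2 v -> has isM v ->
    (countM v * N + 1 + find isM v + find isM (rev v) <= size v + N)%N.
  move=> v [i [n ->]] Hh; have [d Hd] := factor_run q i n.
  exact: (@KL2 N _ d Hd Hh).
clearbody N.
have c0 : forall v : seq letter, ~~ has isM v -> countM v = 0%N.
  by move=> v; rewrite has_count -/(countM v) -leqNgt leqn0 => /eqP.
split.
- move=> v Hv.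
  have Hnat : (countM v * N + 1 <= size v + N)%N.
    case Hh: (has isM v); first by have := key v Hv Hh; lia.
    by rewrite c0 ?Hh //; lia.
  have H1 : (countM v)%:Q - 1 <= ((size v)%:Q - 1) / N%:Q.
    rewrite -!pmulrn ler_pdivlMr ?ltr0n //.
    move: Hnat; rewrite -(ler_nat rat) !natrD natrM /=; lra.
  by move: H1; lra.
- move=> v Delta Hv Hk.
  have Hnat : (countM v * N + 1 + Delta <= size v + N)%N.
    case Hh: (has isM v).
      have := key v Hv Hh.
      case: Hk => [[k [H1 H2 H3]]|[k [H1 H2 H3]]].
        by have := @find_take _ _ H2 H3; lia.
      by have := @find_drop _ _ H2 H3; lia.
    rewrite c0 ?Hh //.
    by case: Hk => [[k [H1 H2 H3]]|[k [H1 H2 H3]]]; lia.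
  have H1 : (countM v)%:Q - 1 < ((size v)%:Q - Delta%:Q) / N%:Q.
    rewrite -!pmulrn ltr_pdivlMr ?ltr0n //.
    move: Hnat; rewrite -(ler_nat rat) !natrD natrM /=; lra.
  have H2 : ((countM v)%:Z - 1 < Num.ceil (((size v)%:Q - Delta%:Q) / N%:Q))%R.
    by rewrite ceil_gt_int rmorphB /= rmorph1.
  by move: H2; lia.
Qed.
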